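(* Let $n,p,r\ge 1$, let $A_0,A_1\in\mathbb{R}^{n\times n}$, $B\in\mathbb{R}^{n\times r}$, $C\in\mathbb{R}^{p\times n}$, and consider the second order continuous-time linear system $$x''(t)=A_0x(t)+A_1x'(t)+Bu(t),\qquad x(0)=x_0,\ x'(0)=x_1,\qquad y(t)=Cx(t),$$ with state $x(t)\in\mathbb{R}^n$, input $u(t)\in\mathbb{R}^r$, output $y(t)\in\mathbb{R}^p$ and unknown initial vectors $x_0,x_1\in\mathbb{R}^n$, where $x(\cdot)$ is continuously differentiable of order $2n-1$ and $u(\cdot)$ is continuously differentiable of order $2n-3$. Define matrices $S_k,P_k\in\mathbb{R}^{n\times n}$ by $S_0=A_0$, $P_0=A_1$ and, for $k\ge1$, $S_k=P_{k-1}A_0$, $P_k=S_{k-1}+P_{k-1}A_1$. Let $\mathcal{O}(A_0,A_1,C)$ be the $(2np)\times(2n)$ block matrix whose block rows are, in order, $$\begin{bmatrix} C & 0_{p\times n}\end{bmatrix},\ \begin{bmatrix} 0_{p\times n} & C\end{bmatrix},\ \begin{bmatrix} CS_0 & CP_0\end{bmatrix},\ \dots,\ \begin{bmatrix} CS_{2n-3} & CP_{2n-3}\end{bmatrix}.$$ Then the system is observable if and only if $\mathcal{O}(A_0,A_1,C)$ has full rank, i.e. $\operatorname{rank}\mathcal{O}(A_0,A_1,C)=2n$.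
   Context: The system is called observable (on an interval $[0,t_1]$, $t_1>0$) if any initial state $(x_0,x_1)$ at $t=0$ can be uniquely determined from the knowledge of the output $y(t)$ and the input $u(t)$ over $[0,t_1]$. Here $0_{p\times n}$ denotes the $p\times n$ zero matrix. *)

(* Defs.v *)
From HB Require Import structures.
From mathcomp Require Import all_boot all_order all_algebra.
From mathcomp Require Import all_classical all_reals all_analysis.
Set Implicit Arguments. Unset Strict Implicit. Unset Printing Implicit Defensive.
Import Order.TTheory GRing.Theory Num.Theory.
Import numFieldNormedType.Exports.
Local Open Scope ring_scope.
Local Open Scope classical_set_scope.

Definition Ck {R : realType} {V : normedModType R} (k : nat) (f : R -> V) : Prop :=
  (forall m t, (m < k)%N -> derivable (derive1n m f) t 1) /\ continuous (derive1n k f).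

Fixpoint SP {R : realType} {n : nat} (A0 A1 : 'M[R]_n) (k : nat) : 'M[R]_n * 'M[R]_n :=
  match k with
  | 0 => (A0, A1)
  | k'.+1 => let SPk := SP A0 A1 k' in (SPk.2 *m A0, SPk.1 + SPk.2 *m A1)
  end.

Definition Smx {R : realType} {n : nat} (A0 A1 : 'M[R]_n) k := (SP A0 A1 k).1.
Definition Pmx {R : realType} {n : nat} (A0 A1 : 'M[R]_n) k := (SP A0 A1 k).2.

Definition obsmx {R : realType} {n p : nat} (A0 A1 : 'M[R]_n) (C : 'M[R]_(p, n)) :=
  col_mx (row_mx C (0 : 'M[R]_(p, n)))
    (col_mx (row_mx (0 : 'M[R]_(p, n)) C)
       (\mxcol_(k < (2 * n - 2)%N)
           (row_mx (C *m Smx A0 A1 k) (C *m Pmx A0 A1 k) : 'M[R]_(p, n + n)))).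

Definition is_solution {R : realType} {n r : nat} (A0 A1 : 'M[R]_n) (B : 'M[R]_(n, r))
    (t1 : R) (x : R -> 'cV[R]_n) (u : R -> 'cV[R]_r) : Prop :=
  [/\ Ck (2 * n - 1) x, (forall t, derivable (derive1 x) t 1), Ck (2 * n - 3) u &
      forall t, 0 <= t <= t1 -> derive1n 2 x t = A0 *m x t + A1 *m derive1 x t + B *m u t].

Definition observable_on {R : realType} {n r p : nat} (A0 A1 : 'M[R]_n) (B : 'M[R]_(n, r))
    (C : 'M[R]_(p, n)) (t1 : R) : Prop :=
  forall (u : R -> 'cV[R]_r) (x z : R -> 'cV[R]_n),
    is_solution A0 A1 B t1 x u -> is_solution A0 A1 B t1 z u ->
    (forall t, 0 <= t <= t1 -> C *m x t = C *m z t) ->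
    x 0 = z 0 /\ derive1 x 0 = derive1 z 0.

(* Main.v *)
Require Import Defs.
From HB Require Import structures.
From mathcomp Require Import all_boot all_order all_algebra.
From mathcomp Require Import all_classical all_reals all_analysis.
From mathcomp Require Import zify ring.
Import Order.TTheory GRing.Theory Num.Theory.
Import numFieldNormedType.Exports.
Local Open Scope ring_scope.

Section Calc.
Variable R : realType.
Local Open Scope classical_set_scope.

Lemma der_mulmx m n q (A : 'M[R]_(m, n)) (f : R -> 'M[R]_(n, q)) t :
  derivable f t 1 ->
  derivable (fun s => A *m f s) t 1 /\ derive1 (fun s => A *m f s) t = A *m derive1 f t.
Proof.
move=> df.
have Hf := (derivable_mxP f t 1).1 df.
have He : forall i j, (fun s => (A *m f s) i j) =
    \sum_(k < n) (fun s => A i k *: (fun s => f s k j) s).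
  by move=> i j; apply/funext => s; rewrite fct_sumE mxE.
have Hd : forall i j, derivable (fun s => (A *m f s) i j) t 1.
  move=> i j; rewrite He; apply: derivable_sum => k.
  apply: derivableZ. exact: Hf.
have dA : derivable (fun s => A *m f s) t 1 by apply/derivable_mxP.
split => //.
rewrite !derive1E derive_mx // derive_mx //; apply/matrixP => i j.
rewrite !mxE He derive_sum; last by move=> k; apply: derivableZ; exact: Hf.
apply: eq_bigr => k _; rewrite deriveZ ?mxE //.
Qed.

Lemma abc (V : zmodType) (a b c a' b' : V) :
  a + b + c - (a' + b' + c) = a - a' + (b - b').
Proof. by rewrite [a' + b' + c]addrC opprD addrA addrK opprD addrACA. Qed.

Lemma zero_at0 n (f : R -> 'cV[R]_n) (t1 : R) : 0 < t1 ->
  {for 0, continuous f} -> (forall t, 0 < t < t1 -> f t = 0) -> f 0 = 0.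
Proof.
move=> t10 cf f0.
have H1 := cvg_at_right_filter cf.
have H2 : f x @[x --> 0^'+] --> (0 : 'cV[R]_n).
  apply: cvg_near_cst.
  near=> x; apply: f0; apply/andP; split.
    by near: x; exact: nbhs_right_gt.
  by near: x; exact: nbhs_right_lt.
by rewrite -(cvg_lim _ H1) // (cvg_lim _ H2).
Unshelve. all: by end_near.
Qed.

End Calc.

Section Alg.
Variable R : realType.

Definition Mbig {n} (A0 A1 : 'M[R]_n) : 'M[R]_(n + n) := block_mx 0 1%:M A0 A1.

Lemma rowM n q (A0 A1 : 'M[R]_n) (X Y : 'M[R]_(q, n)) :
  row_mx X Y *m Mbig A0 A1 = row_mx (Y *m A0) (X + Y *m A1).
Proof. by rewrite /Mbig mul_row_block !mulmx0 mulmx1 add0r. Qed.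

Lemma blk n p (A0 A1 : 'M[R]_n) (C : 'M[R]_(p, n)) k :
  row_mx (C *m Smx A0 A1 k) (C *m Pmx A0 A1 k) =
  row_mx C 0 *m Mbig A0 A1 ^+ k.+2.
Proof.
elim: k => [|k IH].
  by rewrite expr2 -mulmxE mulmxA rowM (mul0mx _ A0) (mul0mx _ A1) addr0 rowM add0r.
by rewrite exprSr -mulmxE mulmxA -IH rowM /Smx /Pmx /= !mulmxA mulmxDr mulmxA.
Qed.

Lemma obs_mul n p (A0 A1 : 'M[R]_n) (C : 'M[R]_(p, n)) (y : 'cV[R]_(n + n)) :
  obsmx A0 A1 C *m y =
  col_mx (row_mx C 0 *m y) (col_mx (row_mx C 0 *m Mbig A0 A1 *m y)
    (\mxcol_(k < (2 * n - 2)%N) (row_mx C 0 *m Mbig A0 A1 ^+ k.+2 *m y))).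
Proof.
rewrite /obsmx !mul_col_mx mxcol_mul; congr col_mx; congr col_mx.
  by rewrite rowM (mul0mx _ A0) (mul0mx _ A1) addr0.
by apply: eq_mxcol => k; rewrite blk.
Qed.

Lemma obs_eq0 n p (A0 A1 : 'M[R]_n) (C : 'M[R]_(p, n)) (y : 'cV[R]_(n + n)) :
  (0 < n)%N ->
  obsmx A0 A1 C *m y = 0 <->
  (forall k, (k < 2 * n)%N -> row_mx C 0 *m Mbig A0 A1 ^+ k *m y = 0).
Proof.
move=> n0; rewrite obs_mul; split.
  move=> /eqP; rewrite !col_mx_eq0 => /andP[/eqP H0 /andP[/eqP H1 /eqP H2]] k.
  case: k => [|[|k]] hk; first by rewrite expr0 mulmx1.
    by rewrite expr1.
  have hk' : (k < 2 * n - 2)%N by rewrite ltn_subRL.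
  have := mxcolK (fun k : 'I_(2 * n - 2) => row_mx C 0 *m Mbig A0 A1 ^+ k.+2 *m y)
      (Ordinal hk'); rewrite H2 => <-.
  by apply/matrixP => i j; rewrite !mxE.
move=> H.
have -> : row_mx C 0 *m y = 0 by have := H 0%N; rewrite expr0 mulmx1; apply; lia.
have -> : row_mx C 0 *m Mbig A0 A1 *m y = 0.
  by have := H 1%N; rewrite expr1; apply; lia.
have -> : \mxcol_(k < (2 * n - 2)%N) (row_mx C 0 *m Mbig A0 A1 ^+ k.+2 *m y) =
    \mxcol_(k < (2 * n - 2)%N) (0 : 'M[R]_(p, 1)).
  by apply: eq_mxcol => k; apply: H; have := ltn_ord k; lia.
by rewrite mxcol0 !col_mx0.
Qed.

Lemma full_inj m N (A : 'M[R]_(m, N)) (y : 'cV[R]_N) :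
  \rank A = N -> A *m y = 0 -> y = 0.
Proof.
move=> rk Ay.
have rf : row_free A^T by rewrite /row_free mxrank_tr rk.
apply: trmx_inj; rewrite trmx0; apply/eqP.
by rewrite -(mulmx_free_eq0 _ rf) -trmx_mul Ay trmx0.
Qed.

Lemma not_full m N (A : 'M[R]_(m, N)) :
  \rank A != N -> exists y : 'cV[R]_N, y != 0 /\ A *m y = 0.
Proof.
move=> rk.
have hlt : (\rank A < N)%N by rewrite ltn_neqAle rk rank_leq_col.
have : kermx A^T != 0.
  by rewrite -mxrank_eq0 mxrank_ker mxrank_tr -lt0n subn_gt0.
case/matrix0Pn => i [j Hij].
exists (row i (kermx A^T))^T; split.
  apply/negP => /eqP H; move: Hij.
  by have := congr1 (fun M : 'cV[R]_N => M j ord0) H; rewrite !mxE => ->; rewrite eqxx.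
by rewrite -[A]trmxK -trmx_mul trmxK -row_mul mulmx_ker row0 trmx0.
Qed.

Lemma CH_ext N q (M : 'M[R]_N) (L : 'M[R]_(q, N)) (y : 'cV[R]_N) :
  (forall k, (k < N)%N -> L *m M ^+ k *m y = 0) ->
  forall k, L *m M ^+ k *m y = 0.
Proof.
case: N M L y => [|N] M L y H k.
  have -> : y = 0 by apply/matrixP => -[].
  by rewrite mulmx0.
suff step : forall z : 'cV[R]_N.+1, (forall k, (k < N.+1)%N -> L *m M ^+ k *m z = 0) ->
    (forall k, (k < N.+1)%N -> L *m M ^+ k *m (M *m z) = 0).
  have Hk : forall j, forall k, (k < N.+1)%N -> L *m M ^+ k *m (M ^+ j *m y) = 0.
    elim=> [|j IH]; first by move=> k0 hk0; rewrite expr0 mul1mx H.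
    by move=> k0 hk0; rewrite exprS -mulmxE -(mulmxA M); exact: (step _ IH).
  by have := Hk k 0%N isT; rewrite expr0 mulmx1 mulmxA.
move=> z Hz k0 hk0; rewrite mulmxA -(mulmxA L) mulmxE -exprSr.
case: (ltnP k0.+1 N.+1) => hk1; first exact: Hz.
have -> : k0.+1 = N.+1 by apply/eqP; rewrite eqn_leq hk1 andbT.
have CH := Cayley_Hamilton M.
set p := char_poly M in CH.
have sp : size p = N.+2 by rewrite size_char_poly.
have lp : p`_N.+1 = 1.
  by have := char_poly_monic M; rewrite monicE /lead_coef sp => /eqP.
have : horner_mx M p = \sum_(i < N.+2) p`_i *: M ^+ i.
  have hZ : forall (c : R) i, horner_mx M (c *: 'X^i) = c *: M ^+ i.
    by move=> c i; rewrite -mul_polyC rmorphM /= horner_mx_C rmorphXn /= horner_mx_X -mulmxE mul_scalar_mx.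
  rewrite -{1}(coefK p) poly_def sp raddf_sum; apply: eq_bigr => i _.
  exact: hZ.
rewrite CH big_ord_recr /= lp scale1r => /eqP; rewrite eq_sym addrC addr_eq0 => /eqP ->.
rewrite mulmxN mulNmx mulmx_sumr mulmx_suml big1 ?oppr0 // => i _.
by rewrite -scalemxAr -scalemxAl Hz ?scaler0.
Qed.

End Alg.

Section Exp.
Variable R : realType.
Local Open Scope classical_set_scope.
Variable N : nat.
Variable M : 'M[R]_N.

Definition cf (v : 'cV[R]_N) (i : 'I_N) (k : nat) : R := (M ^+ k *m v) i 0 / k`!%:R.
Definition Ef (v : 'cV[R]_N) (t : R) : 'cV[R]_N := \col_i limn (pseries (cf v i) t).

Definition nrm (y : 'cV[R]_N) : R := \sum_i `|y i 0|.
Definition bM : R := \sum_i \sum_j `|M i j|.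

Lemma nrm_ge0 (y : 'cV[R]_N) : 0 <= nrm y.
Proof. by apply: sumr_ge0 => i _. Qed.

Lemma bM_ge0 : 0 <= bM.
Proof. by apply: sumr_ge0 => i _; apply: sumr_ge0. Qed.

Lemma entry_le (y : 'cV[R]_N) i : `|y i 0| <= nrm y.
Proof. by rewrite /nrm (bigD1 i) //= lerDl sumr_ge0. Qed.

Lemma nrmM (y : 'cV[R]_N) : nrm (M *m y) <= bM * nrm y.
Proof.
rewrite /nrm /bM mulr_suml; apply: ler_sum => i _; rewrite mxE mulr_suml.
apply: le_trans (ler_norm_sum _ _ _) _; apply: ler_sum => j _.
by rewrite normrM ler_wpM2l // entry_le.
Qed.

Lemma nrmX k (y : 'cV[R]_N) : nrm (M ^+ k *m y) <= bM ^+ k * nrm y.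
Proof.
elim: k => [|k IH]; first by rewrite expr0 mul1mx mul1r.
rewrite exprS -mulmxE -mulmxA (le_trans (nrmM _)) // exprS -mulrA.
by rewrite ler_wpM2l // bM_ge0.
Qed.

Lemma cvg_cf (v : 'cV[R]_N) i (x : R) : cvgn (pseries (cf v i) x).
Proof.
apply: normed_cvg; rewrite /normed_series_of /=.
apply: (@series_le_cvg _ _ (fun k => nrm v * exp_coeff (bM * `|x|) k)); last first.
  exact: (is_cvg_seriesZ (k := nrm v) (is_cvg_series_exp_coeff (bM * `|x|))).
- move=> k; rewrite /exp_coeff /= /cf.
  have He := le_trans (entry_le (M ^+ k *m v) i) (nrmX k v).
  rewrite normrM normrM normfV normrX [`|k`!%:R|]ger0_norm // exprMn.
  have -> : nrm v * (bM ^+ k * `|x| ^+ k / k`!%:R) =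
     (bM ^+ k * nrm v) * (`|x| ^+ k / k`!%:R) by ring.
  have -> : `|(M ^+ k *m v) i 0| / k`!%:R * `|x| ^+ k =
     `|(M ^+ k *m v) i 0| * (`|x| ^+ k / k`!%:R) by ring.
  by rewrite ler_wpM2r // divr_ge0 // exprn_ge0.
- move=> k; rewrite /exp_coeff /=; apply: mulr_ge0; first exact: nrm_ge0.
  apply: divr_ge0 => //; apply: exprn_ge0; apply: mulr_ge0; first exact: bM_ge0.
  exact: normr_ge0.
- by move=> k.
Qed.

Lemma cf_diffs (v : 'cV[R]_N) i : pseries_diffs (cf v i) = cf (M *m v) i.
Proof.
apply/funext => k; rewrite /pseries_diffs /cf exprSr -mulmxE -mulmxA factS natrM.
have h1 : (k.+1%:R : R) != 0 by rewrite pnatr_eq0.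
have h2 : (k`!%:R : R) != 0 by rewrite pnatr_eq0 -lt0n fact_gt0.
have h1' : 1 + k%:R != 0 :> R by rewrite addrC natr1.
by field; rewrite h2 h1'.
Qed.

Lemma dEi (v : 'cV[R]_N) i (x : R) : is_derive x (1:R) (fun t => limn (pseries (cf v i) t))
  (limn (pseries (cf (M *m v) i) x)).
Proof.
rewrite -cf_diffs; apply: (pseries_snd_diffs (K := `|x| + 1)).
- exact: cvg_cf.
- by rewrite cf_diffs; exact: cvg_cf.
- by rewrite !cf_diffs; exact: cvg_cf.
- have hp : 0 <= `|x| + 1 by rewrite addr_ge0.
  by rewrite (ger0_norm hp) ltrDl.
Qed.

Lemma Ef_der (v : 'cV[R]_N) (t : R) : derivable (Ef v) t 1 /\ derive1 (Ef v) t = Ef (M *m v) t.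
Proof.
have He : forall i j, (fun s => Ef v s i j) = (fun s => limn (pseries (cf v i) s)).
  by move=> i j; apply/funext => s; rewrite mxE.
have dE : derivable (Ef v) t 1.
  by apply/derivable_mxP => i j; rewrite He; have [] := dEi v i t.
split => //; rewrite derive1E derive_mx //; apply/matrixP => i j.
by rewrite !mxE He; have [_ ->] := dEi v i t.
Qed.

Lemma lim_sum_cvg (u : 'I_N -> nat -> R) :
  (forall j, cvgn (u j)) -> limn (\sum_(j < N) u j) = \sum_(j < N) limn (u j).
Proof.
move=> cu; apply: cvg_lim => //.
elim/big_ind2 : _ => [|f a g b Hf Hg|j _].
- exact: cvg_cst.
- exact: cvgD.
- exact: cu.
Qed.

Lemma Ef_mul q (L : 'M[R]_(q, N)) (v : 'cV[R]_N) (t : R) :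
  L *m Ef v t = \col_i limn (pseries (fun k => (L *m (M ^+ k *m v)) i 0 / k`!%:R) t).
Proof.
apply/matrixP => i j; rewrite !mxE.
have -> : pseries (fun k => (L *m (M ^+ k *m v)) i 0 / k`!%:R) t =
    \sum_(j0 < N) (fun n => L i j0 * pseries (cf v j0) t n).
  apply/funext => n; rewrite fct_sumE /pseries /series /=.
  under [RHS]eq_bigr do rewrite big_distrr /=.
  rewrite exchange_big /=; apply: eq_bigr => k _.
  rewrite mxE !mulr_suml; apply: eq_bigr => j0 _.
  by rewrite /cf !mxE !mulrA.
rewrite lim_sum_cvg; last first.
  move=> j0; apply/cvg_ex; exists (L i j0 * limn (pseries (cf v j0) t)).
  exact: (cvgM (cvg_cst _) (cvg_cf v j0 t)).
apply: eq_bigr => j0 _; rewrite mxE.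
apply/esym; apply: cvg_lim => //.
exact: (cvgM (cvg_cst _) (cvg_cf v j0 t)).
Qed.

Lemma Ef_M (v : 'cV[R]_N) (t : R) : Ef (M *m v) t = M *m Ef v t.
Proof.
rewrite Ef_mul; apply/matrixP => i j; rewrite !mxE.
have -> : (fun k => (M *m (M ^+ k *m v)) i 0 / k`!%:R) = cf (M *m v) i.
  by apply/funext => k; rewrite /cf mulmxA mulmxE -exprS exprSr -mulmxE -mulmxA.
by [].
Qed.

Lemma Ef_zero q (L : 'M[R]_(q, N)) (v : 'cV[R]_N) (t : R) :
  (forall k, L *m (M ^+ k *m v) = 0) -> L *m Ef v t = 0.
Proof.
move=> H; rewrite Ef_mul; apply/matrixP => i j; rewrite !mxE.
have -> : pseries (fun k => (L *m (M ^+ k *m v)) i 0 / k`!%:R) t = (fun _ => 0).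
  apply/funext => n; rewrite /pseries /series /=; apply: big1 => k _.
  by rewrite H mxE !mul0r.
by apply: cvg_lim => //; exact: cvg_cst.
Qed.

Lemma Ef0 (v : 'cV[R]_N) : Ef v 0 = v.
Proof.
apply/matrixP => i j; rewrite !mxE (ord1 j).
apply: cvg_lim => //; rewrite -cvg_shiftS.
have -> : (fun n => pseries (cf v i) 0 n.+1) = (fun _ => v i 0).
  apply/funext => n; rewrite /pseries /series /= big_nat_recl //= big1 ?addr0.
    by rewrite /cf expr0 mul1mx expr0 mulr1 fact0 divr1.
  by move=> k _; rewrite expr0n /= mulr0.
exact: cvg_cst.
Qed.

End Exp.

Section Cst.
Variable R : realType.

Lemma derive1_cst0 (V : normedModType R) : derive1 (fun _ : R => (0 : V)) = (fun _ => 0).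
Proof. by apply/funext => t; rewrite derive1E derive_cst. Qed.

Lemma derive1n_cst0 (V : normedModType R) m :
  derive1n m (fun _ : R => (0 : V)) = (fun _ => 0).
Proof.
elim: m => [//|m IH].
by change (derive1 (derive1n m (fun _ : R => (0 : V))) = (fun _ => 0)); rewrite IH derive1_cst0.
Qed.

Lemma Ck_cst0 (V : normedModType R) k : Ck k (fun _ : R => (0 : V)).
Proof.
split; first by move=> m t _; rewrite derive1n_cst0; exact: derivable_cst.
by rewrite derive1n_cst0; exact: cst_continuous.
Qed.

Lemma der_add2 (V : normedModType R) (f g : R -> V) t :
  derivable f t 1 -> derivable g t 1 ->
  derivable (fun s => f s + g s) t 1 /\ derive1 (fun s => f s + g s) t = derive1 f t + derive1 g t.
Proof.
move=> df dg; split; first exact: (derivableD df dg).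
by rewrite !derive1E; exact: (deriveD df dg).
Qed.

Lemma der_sub2 (V : normedModType R) (f g : R -> V) t :
  derivable f t 1 -> derivable g t 1 ->
  derivable (fun s => f s - g s) t 1 /\ derive1 (fun s => f s - g s) t = derive1 f t - derive1 g t.
Proof.
move=> df dg; split; first exact: (derivableB df dg).
by rewrite !derive1E; exact: (deriveB df dg).
Qed.

Lemma der_cont (V : normedModType R) (f : R -> V) t :
  derivable f t 1 -> {for t, continuous f}.
Proof. by move=> df; apply: differentiable_continuous; apply/derivable1_diffP. Qed.

End Cst.

Arguments Mbig {R n}.
Arguments rowM {R n q A0 A1 X Y}.
Arguments blk {R n p A0 A1 C k}.
Arguments obs_eq0 {R n p A0 A1 C y}.
Arguments not_full {R m N A}.
Arguments full_inj {R m N A y}.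
Arguments CH_ext {R N q M L y}.
Arguments zero_at0 {R n f t1}.
Arguments der_mulmx {R m n q} A {f t}.
Arguments Ef {R N} M v t.
Arguments Ef_der {R N} M v t.
Arguments Ef_M {R N M v t}.
Arguments Ef_zero {R N M q L v t}.
Arguments Ef0 {R N M v}.
Arguments der_add2 {R V f g t}.
Arguments der_sub2 {R V f g t}.
Arguments der_cont {R V f t}.
Arguments derive1_cst0 {R V}.
Arguments derive1n_cst0 {R V m}.
Arguments Ck_cst0 {R V k}.
Arguments abc {V a b c a' b'}.

Theorem theorem3p1 (R : realType) (n p r : nat) (A0 A1 : 'M[R]_n) (B : 'M[R]_(n, r))
    (C : 'M[R]_(p, n)) (t1 : R) :
  (1 <= n)%N -> (1 <= p)%N -> (1 <= r)%N -> 0 < t1 ->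
  (observable_on A0 A1 B C t1 <-> \rank (obsmx A0 A1 C) = (2 * n)%N).
Proof.
move=> n0 p1 r1 t10.
have e2n : (2 * n)%N = (n + n)%N by lia.
pose M := Mbig A0 A1.
pose P : 'M[R]_(n, n + n) := row_mx 1%:M 0.
have CP : C *m P = row_mx C 0 by rewrite mul_mx_row mulmx1 mulmx0.
have PM1 : P *m M = row_mx 0 1%:M.
  by rewrite /P /M rowM (mul0mx _ A0) (mul0mx _ A1) addr0.
split.
- move=> Hobs; apply/eqP; apply/negPn/negP => rk0.
  have rk : \rank (obsmx A0 A1 C) != (n + n)%N.
    by apply: contra rk0 => /eqP ->; apply/eqP; lia.
  have [y [y0 Oy]] := not_full rk.
  have Hk : forall k, row_mx C 0 *m M ^+ k *m y = 0.
    apply: CH_ext => k hk; apply: (proj1 (obs_eq0 n0) Oy); lia.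
  pose x := fun t => P *m Ef M y t.
  have dx : forall m, derive1n m x = (fun t => (P *m M ^+ m) *m Ef M y t).
    elim=> [|m IH]; first by apply/funext => t; rewrite expr0 mulmx1.
    change (derive1 (derive1n m x) = (fun t => (P *m M ^+ m.+1) *m Ef M y t)).
    rewrite IH; apply/funext => t.
    have [d1 d2] := Ef_der M y t.
    have [_ ->] := der_mulmx (P *m M ^+ m) d1.
    by rewrite d2 Ef_M exprSr -mulmxE !mulmxA.
  have ddx : forall m t, derivable (derive1n m x) t 1.
    by move=> m t; rewrite dx; exact: (der_mulmx _ (Ef_der M y t).1).1.
  have dx1 : derive1 x = (fun t => (P *m M) *m Ef M y t).
    by have := dx 1%N; rewrite expr1.
  pose u := fun _ : R => (0 : 'cV[R]_r).
  pose z := fun _ : R => (0 : 'cV[R]_n).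
  have solx : is_solution A0 A1 B t1 x u.
    split.
    + split; first by move=> m t _; exact: ddx.
      by move=> t; apply: der_cont; exact: ddx.
    + by move=> t; exact: (ddx 1%N t).
    + exact: Ck_cst0.
    + move=> t _; rewrite (dx 2%N) dx1 /x /u mulmx0 addr0 !mulmxA -mulmxDl.
      congr (_ *m _); rewrite PM1 -(mulmxA A1) PM1 /M rowM.
      rewrite !mul_mx_row !mulmx1 !mulmx0 add_row_mx addr0 add0r.
      by rewrite !mul1mx add0r.
  have solz : is_solution A0 A1 B t1 z u.
    split.
    + exact: Ck_cst0.
    + by move=> t; rewrite /z derive1_cst0; exact: derivable_cst.
    + exact: Ck_cst0.
    + by move=> t _; rewrite /z /u derive1n_cst0 derive1_cst0 !mulmx0 !addr0.
  have Hout : forall t, 0 <= t <= t1 -> C *m x t = C *m z t.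
    move=> t _; rewrite /x /z mulmx0 mulmxA CP; apply: Ef_zero => k.
    by rewrite mulmxA Hk.
  have [E0 E1] := Hobs u x z solx solz Hout.
  move: E0 E1; rewrite dx1 /x /z derive1_cst0 !Ef0 PM1 => E0 E1.
  move: E0 E1; rewrite -[y]vsubmxK !mul_row_col !mul1mx !mul0mx add0r addr0 => E0 E1.
  by move: y0; rewrite -[y]vsubmxK E0 E1 col_mx0 eqxx.
- move=> rk u x z [Ckx dx' _ Ox] [Ckz dz' _ Oz] Hout.
  have rk' : \rank (obsmx A0 A1 C) = (n + n)%N by rewrite rk; lia.
  have dx : forall t, derivable x t 1 by move=> t; apply: (Ckx.1 0%N t); lia.
  have dz : forall t, derivable z t 1 by move=> t; apply: (Ckz.1 0%N t); lia.
  pose w := fun t => x t - z t.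
  have dw : forall t, derivable w t 1 /\ derive1 w t = derive1 x t - derive1 z t.
    by move=> t; exact: der_sub2.
  have w'E : derive1 w = (fun t => derive1 x t - derive1 z t).
    by apply/funext => t; exact: (dw t).2.
  have dw' : forall t, derivable (derive1 w) t 1 /\
      derive1 (derive1 w) t = derive1 (derive1 x) t - derive1 (derive1 z) t.
    by move=> t; rewrite w'E; exact: der_sub2.
  have Ow : forall t, 0 <= t <= t1 ->
      derive1 (derive1 w) t = A0 *m w t + A1 *m derive1 w t.
    move=> t ht; rewrite (dw' t).2 (dw t).2.
    have := Ox t ht; have := Oz t ht.
    change (derive1n 2 x t) with (derive1 (derive1 x) t).
    change (derive1n 2 z t) with (derive1 (derive1 z) t).
    move=> -> ->; rewrite abc /w !mulmxBr.
    by [].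
  pose X k := lsubmx (P *m M ^+ k).
  pose Y k := rsubmx (P *m M ^+ k).
  have XY : forall k, X k.+1 = Y k *m A0 /\ Y k.+1 = X k + Y k *m A1.
    move=> k.
    have e : P *m M ^+ k.+1 = row_mx (Y k *m A0) (X k + Y k *m A1).
      by rewrite exprSr -mulmxE mulmxA -[P *m M ^+ k]hsubmxK rowM.
    by rewrite /X /Y e row_mxKl row_mxKr.
  pose g k t := X k *m w t + Y k *m derive1 w t.
  have dg : forall k t, 0 <= t <= t1 -> derivable (g k) t 1 /\ derive1 (g k) t = g k.+1 t.
    move=> k t ht.
    have [a1 a2] := der_mulmx (X k) (dw t).1.
    have [b1 b2] := der_mulmx (Y k) (dw' t).1.
    have [c1 c2] := der_add2 a1 b1.
    split; first exact: c1.
    rewrite /g c2 a2 b2 Ow // (proj1 (XY k)) (proj2 (XY k)).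
    rewrite mulmxDr !mulmxA mulmxDl addrCA.
    by [].
  have Cg : forall k t, 0 < t < t1 -> C *m g k t = 0.
    elim=> [|k IH] t ht.
      have X0 : X 0%N = 1%:M by rewrite /X expr0 mulmx1 row_mxKl.
      have Y0 : Y 0%N = 0 by rewrite /Y expr0 mulmx1 row_mxKr.
      have ht' : 0 <= t <= t1 by case/andP: ht => a b; rewrite !ltW.
      rewrite /g X0 Y0 mul1mx mul0mx addr0 /w mulmxBr Hout //.
      by rewrite subrr.
    have ht' : 0 <= t <= t1 by case/andP: ht => a b; rewrite !ltW.
    rewrite -(dg k t ht').2 -(der_mulmx C (dg k t ht').1).2.
    rewrite derive1E (@near_eq_derive _ _ _ _ (fun _ => 0)).
      by rewrite derive_cst.
    have hin : t \in `]0, t1[ by rewrite in_itv.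
    have := near_in_itvoo hin.
    apply: filterS => s; rewrite in_itv /= => hs.
    exact: IH.
  have s0 : forall t, 0 < t < t1 -> w t = 0 /\ derive1 w t = 0.
    move=> t ht.
    have Os : obsmx A0 A1 C *m col_mx (w t) (derive1 w t) = 0.
      apply/(obs_eq0 n0) => k hk.
      rewrite -CP -!mulmxA (mulmxA P) -[P *m M ^+ k]hsubmxK mul_row_col.
      exact: Cg.
    have := full_inj rk' Os; rewrite -col_mx0 => /eq_col_mx [-> ->].
    by [].
  have w0 : w 0 = 0.
    apply: (zero_at0 t10); first exact: der_cont (dw 0).1.
    by move=> t ht; exact: (s0 t ht).1.
  have w'0 : derive1 w 0 = 0.
    apply: (zero_at0 t10); first exact: der_cont (dw' 0).1.
    by move=> t ht; exact: (s0 t ht).2.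
  split; first by apply/eqP; rewrite -subr_eq0; apply/eqP; exact: w0.
  by apply/eqP; rewrite -subr_eq0; apply/eqP; rewrite -(dw 0).2.
Qed.
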